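(* Let $n\ge2$, let $F:\mathbf{R}^n\to\mathbf{R}$ be an integrand and let $O_F:=\mathrm{Hypo}(\mathcal{I}\circ\mathcal{D}(F))$. Then $\mathfrak{P}O_F=K_F$ and $\mathfrak{P}K_F=O_F$. In particular, $O_F$ is a compact convex set containing $0$ in its interior.
   Context: $\mathbb{S}^{n-1}$ is the unit sphere. An integrand is a lower semicontinuous $F:\mathbf{R}^n\to\mathbf{R}$ with $F(\lambda x)=\lambda F(x)$ for $\lambda\ge0$ and $F>0$ on $\mathbb{S}^{n-1}$. $K_F:=\bigcap_{v\in\mathbb{S}^{n-1}}\{z:\langle z,v\rangle\le F(v)\}$. For $\Omega\subseteq\mathbf{R}^n$, $\mathfrak{P}\Omega:=\{z:\langle z,x\rangle\le1\ \forall x\in\Omega\}$. Operators on integrands (defined on $\mathbb{S}^{n-1}$ and extended by 1-homogeneity): $\mathcal{W}(F)(v):=\inf_{w\in\mathbb{S}^{n-1},\langle v,w\rangle>0}F(w)/\langle v,w\rangle$, $\mathcal{A}(G)(v):=\sup_{w\in\mathbb{S}^{n-1}}G(w)\langle v,w\rangle$, $\mathcal{I}(G)(v):=1/G(v)$, and $\mathcal{D}(F):=\mathcal{A}(\mathcal{W}(F))$. For an integrand $G$, its polar hypograph is $\mathrm{Hypo}(G):=\{\lambda G(v)v: v\in\mathbb{S}^{n-1},\ 0\le\lambda\le1\}$. *)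

(* Defs.v *)
From HB Require Import structures.
From mathcomp Require Import all_boot all_order all_algebra.
From mathcomp Require Import all_classical all_reals all_analysis.
Set Implicit Arguments. Unset Strict Implicit. Unset Printing Implicit Defensive.
Import Order.TTheory GRing.Theory Num.Theory.
Import numFieldNormedType.Exports.
Local Open Scope classical_set_scope.
Local Open Scope ring_scope.

Section Defs.
Variables (R : realType) (n : nat).
Local Notation V := 'rV[R]_n.

Definition dotp (x y : V) : R := \sum_(i < n) x ord0 i * y ord0 i.
Definition enorm (x : V) : R := Num.sqrt (dotp x x).

Definition sphere : set V := [set v | enorm v = 1].

Definition homog1 (F : V -> R) := forall (l : R) (x : V), 0 <= l -> F (l *: x) = l * F x.

Definition integrand (F : V -> R) :=
  lower_semicontinuous (fun x => (F x)%:E) /\ homog1 F /\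
  (forall v, sphere v -> 0 < F v).

Definition hext (g : V -> R) (x : V) : R :=
  if x == 0 then 0 else enorm x * g ((enorm x)^-1 *: x).

Definition KF (F : V -> R) : set V :=
  [set z | forall v, sphere v -> dotp z v <= F v].

Definition polar (O : set V) : set V :=
  [set z | forall x, O x -> dotp z x <= 1].

Definition Wop (F : V -> R) : V -> R :=
  hext (fun v => inf [set F w / dotp v w | w in [set w | sphere w /\ 0 < dotp v w]]).

Definition Aop (G : V -> R) : V -> R :=
  hext (fun v => sup [set G w * dotp v w | w in sphere]).

Definition Iop (G : V -> R) : V -> R := hext (fun v => (G v)^-1).

Definition Dop (F : V -> R) : V -> R := Aop (Wop F).

Definition Hypo (G : V -> R) : set V :=
  [set z | exists v l, [/\ sphere v, 0 <= l, l <= 1 & z = (l * G v) *: v]].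

End Defs.

(* Main.v *)
Require Import Defs.
From HB Require Import structures.
From mathcomp Require Import all_boot all_order all_algebra.
From mathcomp Require Import all_classical all_reals all_analysis.
From mathcomp Require Import lra.
Import Order.TTheory GRing.Theory Num.Theory.
Import numFieldNormedType.Exports.
Local Open Scope classical_set_scope.
Local Open Scope ring_scope.

Set Implicit Arguments. Unset Strict Implicit.


Section S.
Variables (R : realType) (n : nat).
Local Notation V := 'rV[R]_n.
Implicit Types x y z u v w : V.

Lemma dotpC x y : dotp x y = dotp y x.
Proof. by apply: eq_bigr => i _; rewrite mulrC. Qed.

Lemma dotpDl x y z : dotp (x + y) z = dotp x z + dotp y z.
Proof. by rewrite /dotp -big_split; apply: eq_bigr => i _; rewrite !mxE mulrDl. Qed.

Lemma dotpZl a x y : dotp (a *: x) y = a * dotp x y.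
Proof. by rewrite /dotp mulr_sumr; apply: eq_bigr => i _; rewrite !mxE mulrA. Qed.

Lemma dotpNl x y : dotp (- x) y = - dotp x y.
Proof. by rewrite -scaleN1r dotpZl mulN1r. Qed.

Lemma dotpZr a x y : dotp x (a *: y) = a * dotp x y.
Proof. by rewrite dotpC dotpZl dotpC. Qed.

Lemma dotp0l y : dotp 0 y = 0.
Proof. by rewrite -(scale0r (0:V)) dotpZl mul0r. Qed.

Lemma dotp0r y : dotp y 0 = 0.
Proof. by rewrite dotpC dotp0l. Qed.

Lemma dotpp_ge0 x : 0 <= dotp x x.
Proof. by apply: sumr_ge0 => i _; rewrite -expr2 sqr_ge0. Qed.

Lemma dotpp_eq0 x : dotp x x = 0 -> x = 0.
Proof.
move=> /eqP; rewrite psumr_eq0 => [/allP H|i _]; last by rewrite -expr2 sqr_ge0.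
apply/rowP => i; rewrite mxE; apply/eqP.
have := H i (mem_index_enum i); rewrite /= -expr2 sqrf_eq0 //.
Qed.

Lemma coord_le_dotpp x i : (x ord0 i)^+2 <= dotp x x.
Proof.
rewrite /dotp (bigD1 i) //= -expr2 lerDl; apply: sumr_ge0 => j _.
by rewrite -expr2 sqr_ge0.
Qed.

Lemma sphere_dotpp u : sphere u -> dotp u u = 1.
Proof.
rewrite /sphere /enorm /= => H.
by rewrite -(sqr_sqrtr (dotpp_ge0 u)) H expr1n.
Qed.

Lemma sphere_neq0 u : sphere u -> u != 0.
Proof.
move=> /sphere_dotpp H; apply/eqP => u0; move: H; rewrite u0 dotp0l.
by move/eqP; rewrite eq_sym oner_eq0.
Qed.

Lemma sphere_le1 u w : sphere u -> sphere w -> dotp u w <= 1.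
Proof.
move=> /sphere_dotpp Hu /sphere_dotpp Hw.
have := dotpp_ge0 (u - w).
rewrite !(dotpDl, dotpNl) ![dotp _ (u - w)]dotpC !(dotpDl, dotpNl) Hu Hw (dotpC w u).
lra.
Qed.

Lemma enorm_gt0 x : x != 0 -> 0 < enorm x.
Proof.
move=> x0; rewrite /enorm sqrtr_gt0 lt_neqAle dotpp_ge0 andbT.
by apply/eqP => /esym /dotpp_eq0 /eqP; rewrite (negbTE x0).
Qed.

Lemma normalize x : x != 0 -> sphere ((enorm x)^-1 *: x) /\ x = enorm x *: ((enorm x)^-1 *: x).
Proof.
move=> x0; have e0 := enorm_gt0 x0; split; last first.
  by rewrite scalerA divff ?scale1r // gt_eqF.
rewrite /sphere /= /enorm dotpZl dotpZr mulrA sqrtrM; last first.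
  by rewrite mulr_ge0 // invr_ge0 ltW.
rewrite -expr2 sqrtr_sqr ger0_norm ?invr_ge0 ?ltW //.
by rewrite -/(enorm x) mulVf // gt_eqF.
Qed.

Lemma hext_sphere g u : sphere u -> hext g u = g u.
Proof.
move=> su; rewrite /hext (negbTE (sphere_neq0 su)) su invr1 scale1r mul1r.
by [].
Qed.

End S.

Section Ev.
Variables (R : realType) (n : nat).
Local Notation V := 'rV[R]_n.
Definition ev (i : 'I_n) : V := delta_mx ord0 i.

Lemma dotp_ev (x : V) i : dotp x (ev i) = x ord0 i.
Proof.
rewrite /dotp (bigD1 i) //= big1 ?addr0; last first.
  by move=> j ji; rewrite /ev mxE eqxx /= (negbTE ji) mulr0.
by rewrite /ev mxE !eqxx mulr1.
Qed.

Lemma sphere_ev i : sphere (ev i).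
Proof. by rewrite /sphere /= /enorm dotp_ev /ev mxE !eqxx sqrtr1. Qed.
End Ev.


Section Topo.
Variables (R : realType) (n : nat).
Local Notation V := 'rV[R]_n.
Implicit Types x y z u v w : V.

Lemma cont_sum (r : seq 'I_n) (P : 'I_n -> V -> R) :
  (forall i, continuous (P i)) -> continuous (fun x => \sum_(i <- r) P i x).
Proof.
move=> Pc; elim: r => [|i r IH].
  by under eq_fun do rewrite big_nil; apply: cst_continuous.
under eq_fun do rewrite big_cons.
by move=> x; apply: continuousD; [exact: Pc | exact: IH].
Qed.

Lemma cont_dotpl z : continuous (fun x : V => dotp x z).
Proof.
apply: cont_sum => i x; apply: continuousM; first exact: coord_continuous.
exact: cst_continuous.
Qed.

Lemma cont_dotpp : continuous (fun x : V => dotp x x).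
Proof.
apply: cont_sum => i x; apply: continuousM; exact: coord_continuous.
Qed.

Lemma sphereE : @sphere R n = (fun x : V => dotp x x) @^-1` [set 1].
Proof.
apply/seteqP; split => x /=; first exact: sphere_dotpp.
by rewrite /sphere /= /enorm => ->; rewrite sqrtr1.
Qed.

Lemma compact_box (A : set V) (M : R) :
  closed A -> (forall x, A x -> forall i, `|x ord0 i| <= M) -> compact A.
Proof.
move=> Acl AM.
apply: (subclosed_compact Acl (@rV_compact _ _ (fun=> `[- M, M]%classic) _)).
  by move=> _; apply: segment_compact.
move=> x Ax i /=; rewrite in_itv /= -ler_norml; exact: AM.
Qed.

Lemma sphere_compact : compact (@sphere R n).
Proof.
apply: (@compact_box _ 1).
  rewrite sphereE.
  have := proj1 (continuous_closedP (fun x : V => dotp x x)) cont_dotpp.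
  by apply; apply: closed_eq.
move=> x /sphere_dotpp sx i.
have := coord_le_dotpp x i; rewrite sx expr2 => H.
by rewrite ler_norml; apply/andP; split; nra.
Qed.

End Topo.

Section Coord.
Variables (R : realType) (n : nat).
Local Notation V := 'rV[R]_n.

Lemma coord_le_norm (y : V) i : `|y ord0 i| <= `|y|.
Proof.
have /mapP[j Hj ->] : `|y ord0 i| \in [seq `|y x.1 x.2| | x : 'I_1 * 'I_n].
  by apply/mapP; exists (ord0, i) => //=; rewrite mem_enum.
by rewrite [leRHS]/Num.norm /= mx_normrE; apply/bigmax_geP; right => /=; exists j.
Qed.

Lemma ball0_coord (r : R) (y : V) : ball (0 : V) r y -> forall i, `|y ord0 i| < r.
Proof.
rewrite mx_norm_ball /ball_ /= sub0r normrN => H i.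
exact: le_lt_trans (coord_le_norm y i) H.
Qed.
End Coord.


Section LSC.
Variables (R : realType) (n : nat).
Local Notation V := 'rV[R]_n.

Lemma lsc_lb (F : V -> R) : lower_semicontinuous (fun x => (F x)%:E) ->
  (forall v, sphere v -> 0 < F v) ->
  exists2 m, 0 < m & forall v, sphere v -> m <= F v.
Proof.
move=> lsc Fpos.
have H : \forall e \near (0:R)^'+, (@sphere R n) `<=` (fun x => e < F x).
  apply: ((proj1 (compact_near_coveringP _)) (@sphere_compact R n) R ((0:R)^'+)
    (fun e x => e < F x) _).
  move=> x sx; have F0 := Fpos x sx.
  have [U Ux UF] := lsc x (F x / 2) ltac:(rewrite lte_fin; lra).
  exists (U, [set e | e < F x / 2]) => /=.
    split => //; apply: nbhs_right_lt; lra.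
  move=> [y e] [/= Uy ey]; have := UF y Uy; rewrite lte_fin => ?; lra.
have [e [e0 He]] := filter_ex (filterI (nbhs_right_gt (0:R)) H).
  by exists e => // v sv; apply/ltW/He.
Qed.
End LSC.


Section Main.
Variables (R : realType) (n : nat) (F : 'rV[R]_n -> R).
Local Notation V := 'rV[R]_n.
Implicit Types x y z u v w : V.
Hypothesis Fpos : forall {v}, sphere v -> 0 < F v.
Variable m : R.
Hypothesis m0 : 0 < m.
Hypothesis Fm : forall {v}, sphere v -> m <= F v.
Variable i0 : 'I_n.

Local Notation K := (KF F).
Let Su u := [set F w / dotp u w | w in [set w | sphere w /\ 0 < dotp u w]].

Lemma rhoE u : sphere u -> Wop F u = inf (Su u).
Proof. by move=> su; rewrite /Wop hext_sphere. Qed.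

Let Su_lb u : lbound (Su u) 0.
Proof. by move=> _ [w [sw dw] <-]; rewrite divr_ge0 // ltW // Fpos. Qed.

Let Su_ne u : sphere u -> Su u !=set0.
Proof.
move=> su; exists (F u / dotp u u); exists u => //; split => //.
by rewrite sphere_dotpp.
Qed.

Lemma rho_ge0 u : sphere u -> 0 <= Wop F u.
Proof. by move=> su; rewrite rhoE //; apply: lb_le_inf => //; apply: Su_ne. Qed.

Lemma rho_in u : sphere u -> K (Wop F u *: u).
Proof.
move=> su v sv; rewrite dotpZl.
have [d0|d0] := ltP 0 (dotp u v); last first.
  apply: (le_trans _ (ltW (Fpos sv))).
  by rewrite mulr_ge0_le0 // rho_ge0.
rewrite -ler_pdivlMr // rhoE //.
apply: (ge_inf (E := Su u)); first by exists 0; apply: Su_lb.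
by exists v.
Qed.

Lemma rho_max u t : sphere u -> 0 <= t -> K (t *: u) -> t <= Wop F u.
Proof.
move=> su t0 Kt; rewrite rhoE //; apply: lb_le_inf; first exact: Su_ne.
move=> _ [w [sw dw] <-]; rewrite ler_pdivlMr //.
by have := Kt w sw; rewrite dotpZl.
Qed.

Lemma m_in u : sphere u -> K (m *: u).
Proof.
move=> su v sv; rewrite dotpZl; apply: (le_trans _ (Fm sv)).
by rewrite ger_pMr // sphere_le1.
Qed.

Lemma rho_ge_m u : sphere u -> m <= Wop F u.
Proof. by move=> su; apply: rho_max => //; [exact: ltW | exact: m_in]. Qed.

Let Tv v := [set Wop F w * dotp v w | w in @sphere R n].

Lemma hE v : sphere v -> Dop F v = sup (Tv v).
Proof. by move=> sv; rewrite /Dop /Aop hext_sphere. Qed.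

Let Tv_ub v : sphere v -> ubound (Tv v) (F v).
Proof.
move=> sv _ [w sw <-]; rewrite dotpC -dotpZl.
exact: rho_in.
Qed.

Let Tv_ne v : sphere v -> Tv v !=set0.
Proof. by move=> sv; exists (Wop F v * dotp v v); exists v. Qed.

Lemma h_le_F v : sphere v -> Dop F v <= F v.
Proof. by move=> sv; rewrite hE //; apply: ge_sup; [exact: Tv_ne | exact: Tv_ub]. Qed.

Lemma h_ge v : sphere v -> forall w, sphere w -> Wop F w * dotp v w <= Dop F v.
Proof.
move=> sv w sw; rewrite hE //; apply: ub_le_sup; last by exists w.
by exists (F v); apply: Tv_ub.
Qed.

Lemma h_ge_m v : sphere v -> m <= Dop F v.
Proof.
move=> sv; apply: (le_trans _ (h_ge sv sv)).
by rewrite sphere_dotpp // mulr1 rho_ge_m.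
Qed.

Lemma h_gt0 v : sphere v -> 0 < Dop F v.
Proof. by move=> sv; apply: lt_le_trans (h_ge_m sv). Qed.

Lemma h_sup v z : sphere v -> K z -> dotp v z <= Dop F v.
Proof.
move=> sv Kz; have [->|z0] := eqVneq z 0.
  by rewrite dotp0r ltW // h_gt0.
have [su zE] := normalize z0; set u := _ *: z in su zE.
have e0 := enorm_gt0 z0.
rewrite zE dotpZr.
have [d0|d0] := ltP 0 (dotp v u); last first.
  by apply: (le_trans _ (ltW (h_gt0 sv))); rewrite mulr_ge0_le0 // ltW.
apply: (le_trans _ (h_ge sv su)); rewrite ler_pM2r //.
by apply: rho_max => //; [exact: ltW | rewrite -zE].
Qed.

Lemma O_E : Hypo (Iop (Dop F)) = polar K.
Proof.
apply/seteqP; split.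
  move=> _ [v [l [sv l0 l1 ->]]] z Kz.
  rewrite /Iop hext_sphere // dotpZl.
  have h0 := h_gt0 sv.
  have := h_sup sv Kz; rewrite dotpC => hz.
  apply: le_trans (_ : l * ((Dop F v)^-1 * Dop F v) <= 1).
    by rewrite -mulrA ler_wpM2l // ler_wpM2l // invr_ge0 ltW.
  by rewrite mulVf ?gt_eqF // mulr1.
move=> x Px.
have [->|x0] := eqVneq x 0.
  exists (@ev R n i0), 0; split => //; first exact: sphere_ev.
  by rewrite mul0r scale0r.
have [sv xE] := normalize x0; set v := _ *: x in sv xE.
have e0 := enorm_gt0 x0; have h0 := h_gt0 sv.
exists v, (enorm x * Dop F v); split => //.
- by rewrite mulr_ge0 // ltW.
- rewrite -ler_pdivlMl // mulr1 hE //; apply: ge_sup; first exact: Tv_ne.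
  move=> _ [w sw <-]; rewrite /v dotpZl mulrCA.
  rewrite -[X in _ <= X]mulr1; apply: ler_wpM2l; first by rewrite invr_ge0 ltW.
  by rewrite -dotpZr; apply: Px; apply: rho_in.
- by rewrite /Iop hext_sphere // -mulrA mulfV ?gt_eqF // mulr1.
Qed.

Lemma sphereN v : sphere v -> sphere (- v).
Proof. by rewrite /sphere /= /enorm dotpNl dotpC dotpNl opprK. Qed.

Lemma polar_polar : polar (polar K) = K.
Proof.
apply/seteqP; split; last first.
  by move=> z Kz x Px; rewrite dotpC; apply: Px.
move=> z Pz u su.
have h0 := h_gt0 su.
have Ox : polar K ((Dop F u)^-1 *: u).
  rewrite -O_E; exists u, 1; split => //.
  by rewrite mul1r /Iop hext_sphere.
have := Pz _ Ox; rewrite dotpZr => H.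
apply: (le_trans _ (h_le_F su)).
have -> : dotp z u = Dop F u * ((Dop F u)^-1 * dotp z u).
  by rewrite mulrA mulfV ?gt_eqF // mul1r.
by rewrite -[X in _ <= X]mulr1 ler_wpM2l // ltW.
Qed.

Lemma polar_closed : closed (polar K).
Proof.
have -> : polar K = \bigcap_(z in K) [set x | dotp x z <= 1].
  by apply/seteqP; split => x Hx z Kz; apply: Hx.
apply: closed_bigI => z _.
have := proj1 (continuous_closedP (fun x : V => dotp x z)) (@cont_dotpl _ _ z).
by move/(_ [set x : R | x <= 1]); apply; apply: closed_le.
Qed.

Lemma polar_coord x : polar K x -> forall i, `|x ord0 i| <= m^-1.
Proof.
move=> Px i.
have H1 := Px _ (m_in (@sphere_ev R n i)).
have H2 := Px _ (m_in (sphereN (@sphere_ev R n i))).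
move: H1 H2; rewrite !dotpZr (dotpC x (- _)) dotpNl (dotpC (ev _ _)) dotp_ev => H1 H2.
have mi : 0 < m^-1 by rewrite invr_gt0.
have -> : x ord0 i = m^-1 * (m * x ord0 i) by rewrite mulrA mulVf ?gt_eqF // mul1r.
move: H2; rewrite mulrN => H2.
rewrite ler_norml; apply/andP; split; nra.
Qed.

Lemma polar_compact : compact (polar K).
Proof. exact: compact_box polar_closed polar_coord. Qed.

Lemma polar_convex : convex_set (polar K : set (convex_lmodType V)).
Proof.
move=> x y l; rewrite !inE => Px Py z Kz.
change (dotp (l%:num *: x + (1 - l%:num) *: y) z <= 1).
have l0 : 0 <= l%:num by [].
have l1 : l%:num <= 1 by [].
rewrite dotpDl !dotpZl.
have := Px z Kz; have := Py z Kz => ? ?.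
nra.
Qed.

Lemma polar_interior : nbhs (0 : V) (polar K).
Proof.
pose c i := F (ev R i) + F (- ev R i).
have c0 i : 0 <= c i by rewrite addr_ge0 // ltW // Fpos //; [exact: (@sphere_ev R n i) | exact/sphereN/(@sphere_ev R n i)].
pose C := \sum_i c i.
have C0 : 0 <= C by apply: sumr_ge0.
have zc z : K z -> forall i, `|z ord0 i| <= c i.
  move=> Kz i; have H1 := Kz _ (@sphere_ev R n i).
  have H2 := Kz _ (sphereN (@sphere_ev R n i)).
  move: H1 H2; rewrite (dotpC z (- _)) dotpNl (dotpC (ev _ _)) !dotp_ev => H1 H2.
  have := Fpos (@sphere_ev R n i); have := Fpos (sphereN (@sphere_ev R n i)) => ? ?.
  rewrite ler_norml /c; apply/andP; split; lra.
apply/nbhs_ballP; exists (C + 1)^-1; first by rewrite /= invr_gt0; lra.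
move=> y /ball0_coord yr z Kz.
rewrite /dotp.
apply: (le_trans (_ : _ <= \sum_i (C + 1)^-1 * c i)).
  apply: ler_sum => i _.
  apply: (le_trans (ler_norm _)); rewrite normrM.
  apply: ler_pM => //; first exact: ltW.
  exact: zc.
rewrite -mulr_sumr -/C.
by rewrite ler_pdivrMl; lra.
Qed.

End Main.

Unset Implicit Arguments. Set Strict Implicit.


Theorem lemma3p1 (R : realType) (n : nat) (F : 'rV[R]_n -> R) :
  (2 <= n)%N -> integrand F ->
  let O := Hypo (Iop (Dop F)) in
  polar O = KF F /\ polar (KF F) = O /\
  [/\ compact O, convex_set (O : set (convex_lmodType 'rV[R]_n)) & (interior O) 0].
Proof.
move=> n2 [lsc [_ Fpos]] O.
have [m m0 Fm] := lsc_lb lsc Fpos.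
have n0 : (0 < n)%N by apply: leq_trans n2.
pose i0 : 'I_n := Ordinal n0.
have OE : O = polar (KF F) := O_E Fpos m0 Fm i0.
rewrite OE; split; last split => //.
  exact: (polar_polar Fpos m0 Fm i0).
split.
- exact: polar_compact m0 Fm.
- exact: polar_convex.
- exact: polar_interior Fpos.
Qed.
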